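(* Let $E$ be a finite set, $\mathcal{Q}\subseteq 2^E$ a weakly Rayleigh set-system, and $A,B\in\mathcal{Q}$ with $A\cap B=\varnothing$. For every two-element set $\{e,f\}\subseteq B$ and every $g\in A$, at least one of $\mathcal{Q}^f_{eg}$ or $\mathcal{Q}^e_{fg}$ is nonempty.
   Context: For $\omega:2^E\to[0,\infty)$ not identically zero, $Z(\omega;\mathbf{y})=\sum_S\omega(S)\prod_{e\in S}y_e$; with subscripts denoting partial derivatives, $Z$ is Rayleigh if $Z_eZ_f-Z_{ef}Z\ge0$ for all distinct $e,f$ and all positive $\mathbf{y}$. $\mathcal{Q}$ is weakly Rayleigh if some $\omega\ge0$ with $\{S:\omega(S)>0\}=\mathcal{Q}$ has $Z(\omega;\mathbf{y})$ Rayleigh. Notation: $\mathcal{Q}^f_{eg}=\{S\setminus\{e,g\}: S\in\mathcal{Q},\ e,g\in S,\ f\notin S\}$, and similarly $\mathcal{Q}^e_{fg}$. *)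

(* Defs.v *)
From HB Require Import structures.
From mathcomp Require Import all_boot all_order all_algebra.
From mathcomp Require Import reals.
Set Implicit Arguments. Unset Strict Implicit. Unset Printing Implicit Defensive.
Import Order.TTheory GRing.Theory Num.Theory.
Local Open Scope ring_scope.

(* Partial derivative of the multiaffine generating polynomial
   Z(w; y) = \sum_S w(S) \prod_{x in S} y_x  with respect to all variables
   in D (each at most once): since Z is multiaffine in y, this is
   \sum_{S ⊇ D} w(S) \prod_{x in S \ D} y_x. *)
Definition Zpart (R : realType) (E : finType) (w : {set E} -> R)
    (D : {set E}) (y : E -> R) : R :=
  \sum_(S : {set E} | D \subset S) w S * \prod_(x in S :\: D) y x.

Definition Z (R : realType) (E : finType) (w : {set E} -> R) (y : E -> R) : R :=
  Zpart w set0 y.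

Definition Rayleigh (R : realType) (E : finType) (w : {set E} -> R) : Prop :=
  forall (e f : E), e != f -> forall y : E -> R, (forall x, 0 < y x) ->
    0 <= Zpart w [set e] y * Zpart w [set f] y
         - Zpart w [set e; f] y * Z w y.

Definition weakly_Rayleigh (R : realType) (E : finType) (Q : {set {set E}}) : Prop :=
  exists w : {set E} -> R,
    (forall S, 0 <= w S) /\ (forall S, (0 < w S) = (S \in Q)) /\ Rayleigh w.

Definition Qminor (E : finType) (Q : {set {set E}}) (f e g : E) : {set {set E}} :=
  [set S :\ e :\ g | S in [set S in Q | (e \in S) && (g \in S) && (f \notin S)]].

(* Main.v *)
Require Import Defs.
From HB Require Import structures.
From mathcomp Require Import all_boot all_order all_algebra.
From mathcomp Require Import reals.
From mathcomp Require Import lra.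
Set Implicit Arguments. Unset Strict Implicit. Unset Printing Implicit Defensive.
Import Order.TTheory GRing.Theory Num.Theory.
Local Open Scope ring_scope.

Section Aux.
Variables (R : realType) (E : finType) (w : {set E} -> R) (g : E) (t : R).

Definition yt (x : E) : R := if x == g then t else 1.
Definition pp (D : {set E}) : R := \sum_(S : {set E} | (D \subset S) && (g \notin S)) w S.
Definition qq (D : {set E}) : R := \sum_(S : {set E} | (D \subset S) && (g \in S)) w S.

Lemma prod_yt (S : {set E}) :
  \prod_(x in S) yt x = if g \in S then t else 1.
Proof.
case: ifP => gS.
  rewrite (bigD1 g) //= /yt eqxx big1 ?mulr1 // => x /andP[_ /negbTE ->] //.
by rewrite big1 // => x xS; rewrite /yt; case: eqP => // exg; rewrite -exg xS in gS.
Qed.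

Lemma Zpart_t (D : {set E}) : g \notin D -> Zpart w D yt = pp D + t * qq D.
Proof.
move=> gD; rewrite /Zpart (bigID (fun S : {set E} => g \in S)) /= addrC; congr (_ + _).
  apply: eq_bigr => S /andP[_ gS]; rewrite prod_yt in_setD (negbTE gS) andbF mulr1 //.
rewrite /qq mulr_sumr; apply: eq_bigr => S /andP[_ gS].
by rewrite prod_yt in_setD gS gD mulrC.
Qed.
End Aux.

Lemma key (R : realFieldType) (pe pf pef p0 k q0 a b : R) :
  0 <= pe -> 0 <= pf -> 0 <= p0 -> 0 <= k -> 0 < b -> b <= pef -> 0 < a ->
  k + a <= q0 -> exists2 t, 0 < t &
  (pe + t * k) * (pf + t * k) - (pef + t * k) * (p0 + t * q0) < 0.
Proof.
move=> pe0 pf0 p00 k0 b0 bpef a0 q0k.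
set t' := (pe + pf) / a + pe * pf / (a * b) + 1.
have t0 : 0 < t'.
  rewrite /t'; have : 0 <= (pe + pf) / a by apply: divr_ge0; lra.
  have : 0 <= pe * pf / (a * b) by apply: divr_ge0; [exact: mulr_ge0| nra].
  lra.
have h1 : pe + pf <= a * t'.
  rewrite /t' !mulrDr mulr1 mulrCA divff ?mulr1; last by rewrite gt_eqF.
  have : 0 <= a * (pe * pf / (a * b)) by apply: mulr_ge0; [lra|apply: divr_ge0; [exact: mulr_ge0| nra]].
  lra.
have h2 : pe * pf + a * b <= a * b * t'.
  rewrite /t' !mulrDr mulr1 [_ * (pe * pf / _)]mulrCA divff ?mulr1; last by rewrite gt_eqF // mulr_gt0.
  have : 0 <= a * b * ((pe + pf) / a) by apply: mulr_ge0; [nra|apply: divr_ge0; lra].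
  lra.
have h3 : k * t' * (pe + pf - a * t') <= 0.
  by apply: mulr_ge0_le0; [apply: mulr_ge0; lra | lra].
have h4 : 0 <= pef * p0 by nra.
have h5 : 0 <= t' * k * p0 by apply: mulr_ge0 => //; apply: mulr_ge0; lra.
have h6 : b * (t' * q0) <= pef * (t' * q0) by apply: ler_wpM2r; nra.
have h7 : t' * k * (t' * (k + a)) <= t' * k * (t' * q0).
  by apply: ler_wpM2l; [nra | apply: ler_wpM2l; lra].
have h8 : b * (t' * (k + a)) <= b * (t' * q0) by apply: ler_wpM2l; [lra| apply: ler_wpM2l; lra].
have h9 : 0 <= b * (t' * k) by apply: mulr_ge0; [lra|apply: mulr_ge0; lra].
have h10 : 0 < a * b by apply: mulr_gt0.
exists t' => //; lra.
Qed.

Lemma sub2 (E : finType) (e f : E) (S : {set E}) :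
  ([set e; f] \subset S) = (e \in S) && (f \in S).
Proof. by rewrite subUset !sub1set. Qed.

Theorem lemma4p5 (R : realType) (E : finType) (Q : {set {set E}})
    (A B : {set E}) :
  weakly_Rayleigh R Q -> A \in Q -> B \in Q -> A :&: B = set0 ->
  forall e f g : E, e \in B -> f \in B -> e != f -> g \in A ->
    Qminor Q f e g != set0 \/ Qminor Q e f g != set0.
Proof.
move=> [w [w0 [wQ Ray]]] AQ BQ AB e f g eB fB ef gA.
have [H1|] := eqVneq (Qminor Q f e g) set0; last by left.
have [H2|] := eqVneq (Qminor Q e f g) set0; last by right.
exfalso.
have notAB x : x \in A -> x \in B -> False.
  move=> xA xB; have : x \in A :&: B by rewrite inE xA xB.
  by rewrite AB inE.
have gB : g \notin B by apply/negP => /(notAB _ gA).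
have eA : e \notin A by apply/negP => /notAB; apply.
have ge : g != e by apply/eqP => ge; rewrite ge eB in gB.
have gf : g != f by apply/eqP => gf; rewrite gf fB in gB.
have Z1 (S : {set E}) : e \in S -> g \in S -> f \notin S -> w S = 0.
  move=> eS gS fS; apply/eqP; rewrite eq_le w0 andbT leNgt; apply/negP => pos.
  have : S :\ e :\ g \in Qminor Q f e g.
    by apply: imset_f; rewrite inE -wQ pos eS gS fS.
  by rewrite H1 inE.
have Z2 (S : {set E}) : f \in S -> g \in S -> e \notin S -> w S = 0.
  move=> eS gS fS; apply/eqP; rewrite eq_le w0 andbT leNgt; apply/negP => pos.
  have : S :\ f :\ g \in Qminor Q e f g.
    by apply: imset_f; rewrite inE -wQ pos eS gS fS.
  by rewrite H2 inE.
have a0 : 0 < w A by rewrite wQ.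
have b0 : 0 < w B by rewrite wQ.
set k := qq w g [set e; f].
have qe : qq w g [set e] = k.
  rewrite /qq (bigID (fun S : {set E} => f \in S)) /=.
  rewrite [X in _ + X]big1 ?addr0; last first.
    by move=> S /andP[/andP[]]; rewrite sub1set => eS gS fS; apply: Z1.
  by apply: eq_bigl => S; rewrite sub1set sub2; case: (e \in S); case: (f \in S); case: (g \in S).
have qf : qq w g [set f] = k.
  rewrite /qq (bigID (fun S : {set E} => e \in S)) /=.
  rewrite [X in _ + X]big1 ?addr0; last first.
    by move=> S /andP[/andP[]]; rewrite sub1set => eS gS fS; apply: Z2.
  by apply: eq_bigl => S; rewrite sub1set sub2; case: (e \in S); case: (f \in S); case: (g \in S).
have q0 : k + w A <= qq w g set0.
  rewrite /qq (bigID (fun S : {set E} => [set e; f] \subset S)) /=.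
  apply: lerD.
    by rewrite le_eqVlt; apply/orP; left; apply/eqP; apply: eq_bigl => S; rewrite sub0set andbC.
  rewrite (bigD1 A) /=; last by rewrite sub0set gA sub2 (negbTE eA).
  rewrite lerDl; apply: sumr_ge0 => *; exact: w0.
have pef : w B <= pp w g [set e; f].
  rewrite /pp (bigD1 B) /=; last by rewrite sub2 eB fB gB.
  rewrite lerDl; apply: sumr_ge0 => *; exact: w0.
have pge0 D : 0 <= pp w g D by apply: sumr_ge0 => *; exact: w0.
have k0 : 0 <= k by apply: sumr_ge0 => *; exact: w0.
have [t t0 Ht] := key (pge0 [set e]) (pge0 [set f]) (pge0 set0) k0 b0 pef a0 q0.
have ypos : forall x, 0 < yt g t x by move=> x; rewrite /yt; case: eqP.
have := Ray e f ef (yt g t) ypos.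
rewrite /Z !Zpart_t ?in_set1 ?in_set2 ?negb_or ?ge ?gf ?inE // qe qf.
rewrite -/k; lra.
Qed.
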